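(* Let $n$ be an even positive integer. The deterministic query complexity of the partial function $\mathrm{1v2Cycle}$ on $n$ vertices satisfies $D(\mathrm{1v2Cycle})\ge\frac{n^2}{512}$.
   Context: Undirected graphs on vertex set $\{1,\dots,n\}$ are encoded as strings in $\{0,1\}^N$ with $N=\binom n2$, one bit per unordered pair indicating presence of the edge. The partial function $\mathrm{1v2Cycle}:\Delta\to\{0,1\}$ is defined on the set $\Delta$ of graphs that are either a single cycle of length $n$ or a disjoint union of two cycles each of length $n/2$; it equals $1$ on the former and $0$ on the latter. For a partial function $g:\Delta\to\{0,1\}$, $D(g)=\min\{D(f): f:\{0,1\}^N\to\{0,1\},\ f|_\Delta=g\}$, where $D(f)$ for total $f$ is the minimum depth of a deterministic decision tree computing $f$. *)

(* Defs.v *)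
From mathcomp Require Import all_boot.
Set Implicit Arguments. Unset Strict Implicit. Unset Printing Implicit Defensive.

(* Unordered pairs {u,v} of vertices of {0..n-1}, represented as (u,v) with u < v.
   #|edge_idx n| = 'C(n,2) = N : these index the N input bits. *)
Definition edge_idx (n : nat) := {p : 'I_n * 'I_n | p.1 < p.2}.

Definition graph (n : nat) := {ffun edge_idx n -> bool}.

Definition gadj (n : nat) (x : graph n) (u v : 'I_n) : bool :=
  [exists e : edge_idx n, ((val e == (u, v)) || (val e == (v, u))) && x e].

Definition cyc_adj (n : nat) (s : seq 'I_n) (u v : 'I_n) : bool :=
  [&& u != v, u \in s, v \in s & (v == next s u) || (u == next s v)].

Definition one_cycle (n : nat) (x : graph n) : Prop :=
  exists s : seq 'I_n, [/\ uniq s, size s = n &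
    forall u v, u != v -> gadj x u v = cyc_adj s u v].

Definition two_cycles (n : nat) (x : graph n) : Prop :=
  exists s1 s2 : seq 'I_n, [/\ uniq (s1 ++ s2), size s1 = n./2, size s2 = n./2 &
    forall u v, u != v -> gadj x u v = cyc_adj s1 u v || cyc_adj s2 u v].

Inductive dtree (I : Type) : Type :=
  | Leaf of bool
  | Node of I & dtree I & dtree I.

Fixpoint dt_eval (I : Type) (t : dtree I) (x : I -> bool) : bool :=
  match t with
  | Leaf b => b
  | Node i t0 t1 => if x i then dt_eval t1 x else dt_eval t0 x
  end.

Fixpoint dt_depth (I : Type) (t : dtree I) : nat :=
  match t with
  | Leaf _ => 0
  | Node _ t0 t1 => (maxn (dt_depth t0) (dt_depth t1)).+1
  end.

Definition computes (n : nat) (t : dtree (edge_idx n)) (f : graph n -> bool) : Prop :=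
  forall x : graph n, dt_eval t x = f x.

(* f : {0,1}^N -> {0,1} extends the partial function 1v2Cycle (defined on Delta) *)
Definition extends_1v2Cycle (n : nat) (f : graph n -> bool) : Prop :=
  (forall x, one_cycle x -> f x = true) /\ (forall x, two_cycles x -> f x = false).

(* Main.v *)
Require Import Defs.
From mathcomp Require Import all_boot zify.
Set Implicit Arguments. Unset Strict Implicit. Unset Printing Implicit Defensive.

Section Arr.
Variables (T : eqType) (x0 : T) (R : rel T).

Definition jn (U V : seq T) := R (last x0 U) (head x0 V).

Lemma perm_rcons' (S : eqType) (x : S) s : perm_eq (rcons s x) (x :: s).
Proof. by rewrite perm_rcons. Qed.

Lemma has_lt (S : Type) (p : pred S) s : count p s < size s -> has (predC p) s.
Proof. by rewrite has_count -(count_predC p s) -{1}[count p s]addn0 ltn_add2l. Qed.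

Lemma pairs_lem (L Rr : pred (seq T)) X l :
  count L (belast X l) + count Rr l < size l ->
  exists l1 Y Z l2, X :: l = l1 ++ Y :: Z :: l2 /\ ~~ L Y /\ ~~ Rr Z.
Proof.
elim: l X => [|Y l IH] X //=.
case HL: (L X); case HR: (Rr Y) => /=; rewrite ?add0n ?add1n ?addn1 ?addSn ?addnS ?ltnS => H.
- have [l1 [Y' [Z [l2 [E [H1 H2]]]]]] := IH Y (ltnW H).
  by exists (X :: l1), Y', Z, l2; rewrite E.
- have [l1 [Y' [Z [l2 [E [H1 H2]]]]]] := IH Y H.
  by exists (X :: l1), Y', Z, l2; rewrite E.
- have [l1 [Y' [Z [l2 [E [H1 H2]]]]]] := IH Y H.
  by exists (X :: l1), Y', Z, l2; rewrite E.
- by exists [::], X, Y, l; rewrite HL HR.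
Qed.

Lemma rot_slot (zs : seq (seq T)) U :
  count (fun Y => ~~ jn Y U) zs + count (fun Z => ~~ jn U Z) zs < size zs ->
  exists i, jn (last [::] (rot i zs)) U && jn U (head [::] (rot i zs)).
Proof.
case: zs => [|X zs'] // H.
have H' : count (fun Y => ~~ jn Y U) (belast X (rcons zs' X))
   + count (fun Z => ~~ jn U Z) (rcons zs' X) < size (rcons zs' X).
  by rewrite belast_rcons size_rcons (permP (perm_rcons' X zs')).
have [l1 [Y [Z [l2 [E [H1 H2]]]]]] := pairs_lem H'.
rewrite !negbK in H1 H2.
case/lastP: l2 E => [|l2' W] E.
- exists 0; rewrite rot0.
  move: E; rewrite -rcons_cons (_ : l1 ++ [:: Y; Z] = rcons (rcons l1 Y) Z); last by rewrite -!cats1 -catA.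
  move=> /rcons_inj [E1 E2].
  by rewrite -E2 in H2; rewrite E1 last_rcons H1 -E1 /= H2.
- move: E; rewrite -!rcons_cons -rcons_cat => /rcons_inj [E1 E2].
  exists (size (rcons l1 Y)); rewrite E1 -cat_rcons rot_size_cat /=.
  by rewrite last_cat last_rcons H1 H2.
Qed.

Lemma insert_lem (zs : seq (seq T)) U :
  cycle jn zs ->
  count (fun Y => ~~ jn Y U) zs + count (fun Z => ~~ jn U Z) zs < size zs ->
  exists zs', perm_eq zs' (U :: zs) /\ cycle jn zs'.
Proof.
move=> Hc Hs; have [i /andP [H1 H2]] := rot_slot Hs.
have : cycle jn (rot i zs) by rewrite rot_cycle.
have : size (rot i zs) > 0 by rewrite size_rot; case: zs Hs {Hc H1 H2}.
have Hp : perm_eq (rcons (rot i zs) U) (U :: zs).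
  by rewrite perm_rcons perm_cons perm_rot.
move: Hp H1 H2; case: (rot i zs) => [|Z mid] // Hp H1 H2 _ Hc'.
exists (rcons (Z :: mid) U); split => //.
move: Hc'; rewrite /= !rcons_path last_rcons => /andP [-> _] /=.
by rewrite H2 andbT; exact: H1.
Qed.

Variables (B : nat) (us0 : seq (seq T)).
Hypothesis HcL : forall U, U \in us0 -> count (fun V => ~~ jn V U) us0 <= B.
Hypothesis HcR : forall U, U \in us0 -> count (fun V => ~~ jn U V) us0 <= B.

Lemma count_sub (p : pred (seq T)) zs rest :
  perm_eq (zs ++ rest) us0 -> count p zs <= count p us0.
Proof. by move=> Hp; rewrite -(permP Hp) count_cat leq_addr. Qed.

Lemma count_sub2 (p : pred (seq T)) zs rest :
  perm_eq (zs ++ rest) us0 -> count p rest <= count p us0.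
Proof. by move=> Hp; rewrite -(permP Hp) count_cat leq_addl. Qed.

Lemma mem_sub zs rest U : perm_eq (zs ++ rest) us0 -> U \in rest -> U \in us0.
Proof. by move=> Hp HU; rewrite -(perm_mem Hp) mem_cat HU orbT. Qed.

Lemma mem_sub1 zs rest U : perm_eq (zs ++ rest) us0 -> U \in zs -> U \in us0.
Proof. by move=> Hp HU; rewrite -(perm_mem Hp) mem_cat HU. Qed.

Lemma insert_all rest zs :
  cycle jn zs -> 2 * B < size zs -> perm_eq (zs ++ rest) us0 ->
  exists zs', perm_eq zs' us0 /\ cycle jn zs'.
Proof.
elim: rest zs => [|U rest IH] zs Hc Hs Hp.
  by exists zs; rewrite cats0 in Hp.
have HU : U \in us0 by apply: (mem_sub Hp); rewrite inE eqxx.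
have Hcnt : count (fun Y => ~~ jn Y U) zs + count (fun Z => ~~ jn U Z) zs < size zs.
  apply: leq_ltn_trans Hs; rewrite mul2n -addnn leq_add //.
  - exact: leq_trans (count_sub _ Hp) (HcL HU).
  - exact: leq_trans (count_sub _ Hp) (HcR HU).
have [zs' [Hp' Hc']] := insert_lem Hc Hcnt.
apply: (IH zs') => //.
- by rewrite (perm_size Hp') /= ltnS ltnW.
- apply: perm_trans _ Hp; apply: perm_trans (perm_cat Hp' (perm_refl rest)) _.
  by rewrite /= -cat1s perm_catCA.
Qed.

Lemma greedy j : 0 < size us0 -> j + B < size us0 ->
  exists X ps rest, [/\ perm_eq (X :: ps ++ rest) us0, size ps = j & path jn X ps].
Proof.
move=> H0; elim: j => [|j IH] Hj.
  by case: us0 H0 => [|X rest] // _; exists X, [::], rest.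
have [X [ps [rest [Hp Hs Hpa]]]] := IH (ltnW Hj).
have Hlast : last X ps \in us0.
  by rewrite -(perm_mem Hp) -[X :: ps ++ rest]cat_cons mem_cat mem_last.
have Hp1 : perm_eq ((X :: ps) ++ rest) us0 by [].
have Hsz : size rest = size us0 - j.+1.
  by rewrite -(perm_size Hp) /= size_cat Hs subSS addKn.
have : count (fun V => ~~ jn (last X ps) V) rest < size rest.
  apply: leq_ltn_trans (count_sub2 _ Hp1) _.
  apply: leq_ltn_trans (HcR Hlast) _; rewrite Hsz ltn_subRL.
  by move: Hj; rewrite addSn.
move/has_lt => /hasP [U HU] /= Hgood; rewrite negbK in Hgood.
exists X, (rcons ps U), (rem U rest); split.
- apply: perm_trans _ Hp; rewrite perm_cons cat_rcons.
  by rewrite perm_cat2l perm_sym perm_to_rem.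
- by rewrite size_rcons Hs.
- by rewrite rcons_path Hpa.
Qed.

Lemma arrange : 4 * B + 2 <= size us0 ->
  exists zs, perm_eq zs us0 /\ cycle jn zs.
Proof.
move=> Hsz.
have H0 : 0 < size us0 by lia.
have Hj : 2 * B + B < size us0 by lia.
have [X [ps [rest [Hp Hs Hpa]]]] := @greedy (2 * B) H0 Hj.
have Hp1 : perm_eq ((X :: ps) ++ rest) us0 by [].
  have HX : X \in us0 by rewrite -(perm_mem Hp) inE eqxx.
  have Hlast : last X ps \in us0.
    by rewrite -(perm_mem Hp) -[X :: ps ++ rest]cat_cons mem_cat mem_last.
  have Hsz' : size rest = size us0 - (2 * B).+1.
    by rewrite -(perm_size Hp) /= size_cat Hs; lia.
  have : count (fun V => ~~ (jn (last X ps) V && jn V X)) rest < size rest.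
    apply: (@leq_ltn_trans (count (fun V => ~~ jn (last X ps) V) rest
                           + count (fun V => ~~ jn V X) rest)).
      rewrite -count_predUI; apply: leq_trans (leq_addr _ _).
      by apply: sub_count => V /=; rewrite negb_and.
    apply: (@leq_ltn_trans (B + B)).
      apply: leq_add; [exact: leq_trans (count_sub2 _ Hp1) (HcR Hlast)
                      | exact: leq_trans (count_sub2 _ Hp1) (HcL HX)].
    rewrite Hsz'; lia.
  move/has_lt => /hasP [U HU] /=; rewrite negbK => /andP [G1 G2].
  apply: (@insert_all (rem U rest) (X :: rcons ps U)).
  + by rewrite /= !rcons_path Hpa G1 last_rcons G2.
  + by rewrite /= size_rcons Hs.
  + apply: perm_trans _ Hp; rewrite /= perm_cons cat_rcons.
    by rewrite perm_cat2l perm_sym perm_to_rem.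
Qed.

Lemma flat_path U zs :
  U != [::] -> all (fun V => V != [::]) zs ->
  (forall V, V \in U :: zs -> path R (head x0 V) (behead V)) ->
  path jn U zs -> path R (head x0 U) (behead U ++ flatten zs).
Proof.
elim: zs U => [|V zs IH] U HU Hall Hin /=.
  by rewrite cats0 => _; apply: Hin; rewrite inE eqxx.
case/andP: Hall => HV Hall /andP [J1 J2].
rewrite cat_path; apply/andP; split; first by apply: Hin; rewrite inE eqxx.
have -> : last (head x0 U) (behead U) = last x0 U by case: U HU {Hin J1}.
case: V HV J1 J2 Hin => [|v V'] // _ J1 J2 Hin /=.
rewrite /jn /= in J1; rewrite J1 /=; apply: (IH (v :: V')) => //.
by move=> W HW; apply: Hin; rewrite inE HW orbT.
Qed.

Lemma flat_cycle zs :
  all (fun V => V != [::]) zs ->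
  (forall V, V \in zs -> path R (head x0 V) (behead V)) ->
  cycle jn zs -> cycle R (flatten zs).
Proof.
case: zs => [|U zs'] //= /andP [HU Hall] Hin Hc.
have := @flat_path U (rcons zs' U) HU.
rewrite all_rcons HU Hall => /(_ erefl) H.
have {H} : path R (head x0 U) (behead U ++ flatten (rcons zs' U)).
  apply: H => // V; rewrite inE mem_rcons inE orbA orbb => HV.
  by apply: Hin; rewrite inE.
case: U HU Hin Hc => [|u U'] // _ Hin Hc /=.
rewrite -cats1 flatten_cat /= cats0 catA cat_path /= => /andP [H1 /andP [H2 _]].
by rewrite rcons_path H1.
Qed.

End Arr.

Section Lad.
Variable (T : eqType).

Fixpoint ladj (s : seq T) (z w : T) : bool :=
  if s is x :: s' then
    (if s' is y :: _ then ((x == z) && (y == w)) || ladj s' z w else false)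
  else false.

Definition sadj s z w := ladj s z w || ladj s w z.

Lemma ladj_cons x s z w :
  ladj (x :: s) z w = (if s is y :: _ then (x == z) && (y == w) else false) || ladj s z w.
Proof. by case: s. Qed.

Lemma ladj_cons2 x y s z w :
  ladj (x :: y :: s) z w = ((x == z) && (y == w)) || ladj (y :: s) z w.
Proof. by []. Qed.

Lemma ladj_cat p y q z w :
  ladj (p ++ y :: q) z w = ladj (rcons p y) z w || ladj (y :: q) z w.
Proof.
elim: p => [|x p IH] //.
case: p IH => [|x' p] IH; first by rewrite /= orbF.
rewrite cat_cons rcons_cons ladj_cons [ladj (x :: rcons _ _) _ _]ladj_cons IH.
by rewrite orbA.
Qed.

Lemma ladj_rev s z w : ladj (rev s) z w = ladj s w z.
Proof.
elim: s => [|x s IH] //.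
case: s IH => [|b s'] IH; first by [].
rewrite rev_cons rev_cons.
have -> : rcons (rcons (rev s') b) x = rev s' ++ b :: [:: x] by rewrite -!cats1 -catA.
rewrite ladj_cat -rev_cons IH /=.
by rewrite orbF orbC andbC.
Qed.

Lemma sadj_rev s z w : sadj (rev s) z w = sadj s z w.
Proof. by rewrite /sadj !ladj_rev orbC. Qed.

Lemma sadjC s z w : sadj s z w = sadj s w z.
Proof. by rewrite /sadj orbC. Qed.

Lemma ladj_mem s a b : ladj s a b -> (a \in s) && (b \in s).
Proof.
elim: s => [|x s IH] //; case: s IH => [|y s] IH //; rewrite ladj_cons2.
case/orP => [/andP [/eqP -> /eqP ->] | /IH /andP [H1 H2]].
  by rewrite !inE !eqxx orbT.
by rewrite !inE in H1 H2 *; rewrite H1 H2 !orbT.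
Qed.

Lemma ladj_next s z w : uniq s -> ladj s z w -> next s z = w.
Proof.
case: s => [|yy cc] //.
have aux : forall c y y0, uniq (y :: c) -> ladj (y :: c) z w -> next_at z y0 y c = w.
  elim=> [|y' c IH] y1 y0 // /andP [Hn Hu]; rewrite ladj_cons2.
  case/orP => [/andP [/eqP -> /eqP ->] | H].
    by rewrite /= eqxx.
  have /andP [Hz _] := ladj_mem H.
  rewrite /=; have -> : (z == y1) = false.
    by apply/negbTE; apply: contraNneq Hn => <-.
  exact: IH.
exact: aux.
Qed.

Lemma ladj_index s a b : uniq s -> ladj s a b -> index b s = (index a s).+1.
Proof.
elim: s => [|x s IH] //; case: s IH => [|y s] IH //; rewrite ladj_cons2 => /andP [Hn Hu].
case/orP => [/andP [/eqP <- /eqP <-] | H]; rewrite /=.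
  have Hxy : (x == y) = false.
    by apply/negbTE; apply: contraNneq Hn => ->; rewrite inE eqxx.
  by rewrite Hxy !eqxx.
have /andP [Ha Hb] := ladj_mem H.
have -> : (x == a) = false by apply/negbTE; apply: contraNneq Hn => ->.
have -> : (x == b) = false by apply/negbTE; apply: contraNneq Hn => ->.
by have := IH Hu H; rewrite /= => ->.
Qed.

Lemma ladj_catl p q z w : ladj p z w -> ladj (p ++ q) z w.
Proof.
elim: p => [|x p IH] //; rewrite cat_cons !ladj_cons.
case/orP => [H|/IH ->]; last by rewrite orbT.
by case: p H {IH} => [|y p] //= ->.
Qed.

Lemma ladj_catr p q z w : ladj q z w -> ladj (p ++ q) z w.
Proof.
case: q => [|y q] // H; rewrite ladj_cat H orbT //.
Qed.

Lemma ladj_flatten U zs z w : U \in zs -> ladj U z w -> ladj (flatten zs) z w.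
Proof.
elim: zs => [|V zs IH] //=; rewrite inE => /orP [/eqP <- | HU] H.
  exact: ladj_catl.
by apply: ladj_catr; apply: IH.
Qed.

Lemma unit_unique (us : seq (seq T)) (U V : seq T) (x : T) : uniq (flatten us) -> U \in us -> V \in us ->
  x \in U -> x \in V -> U = V.
Proof.
elim: us => [|W us IH] //=; rewrite cat_uniq => /and3P [HW Hd Hu].
rewrite !inE => /orP [/eqP -> | HU] /orP [/eqP -> | HV] // Hx1 Hx2.
- case/hasP: Hd; exists x => //; apply/flattenP; by exists V.
- case/hasP: Hd; exists x => //; apply/flattenP; by exists U.
- exact: IH.
Qed.

Lemma uniq_units (us : seq (seq T)) : uniq (flatten us) -> all (fun V => V != [::]) us -> uniq us.
Proof.
elim: us => [|W us IH] //=; rewrite cat_uniq => /and3P [HW Hd Hu] /andP [HWn Hall].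
rewrite IH // andbT; apply/negP => HWin.
case: W HW Hd HWn {HWin} (HWin) => [|w W] // _ Hd _ HWin.
case/hasP: Hd; exists w; last by rewrite inE eqxx.
by apply/flattenP; exists (w :: W) => //; rewrite inE eqxx.
Qed.

End Lad.

Section G.
Variable n : nat.

Definition mkE (u v : 'I_n) (H : u < v) : edge_idx n := exist _ (u, v) H.

Lemma gadjC (x : graph n) u v : gadj x u v = gadj x v u.
Proof.
by apply/existsP/existsP => [] [e He]; exists e; rewrite orbC.
Qed.

Lemma gadj_edge (x : graph n) (e : edge_idx n) :
  gadj x (val e).1 (val e).2 = x e.
Proof.
apply/existsP/idP => [[e' /andP [H1 H2]] | He]; last first.
  by exists e; rewrite -surjective_pairing eqxx He.
case/orP: H1 => /eqP E.
  by have <- : e' = e by apply: val_inj; rewrite E; case: (val e).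
have := valP e; have := valP e'; rewrite E /= => H3 H4.
by have := ltn_trans H3 H4; rewrite ltnn.
Qed.

Definition graph_of (adj : 'I_n -> 'I_n -> bool) : graph n :=
  [ffun e => adj (val e).1 (val e).2].

Lemma gadj_graph_of adj u v : (forall a b, adj a b = adj b a) -> u != v ->
  gadj (graph_of adj) u v = adj u v.
Proof.
move=> Hs Huv.
have [lt_uv | lt_vu] : u < v \/ v < u.
  by case: (ltngtP u v) => // E; [left | right | move: Huv; rewrite (val_inj E) eqxx].
- rewrite -[u]/((val (mkE lt_uv)).1) -[v in adj _ v]/((val (mkE lt_uv)).2).
  rewrite -[X in gadj _ _ X]/((val (mkE lt_uv)).2).
  by rewrite gadj_edge ffunE.
- rewrite gadjC Hs.
  rewrite -[v]/((val (mkE lt_vu)).1) -[u]/((val (mkE lt_vu)).2).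
  by rewrite gadj_edge ffunE.
Qed.

Definition setA (A : graph n) (e : edge_idx n) : graph n := [ffun e' => A e' || (e' == e)].

Lemma gadj_setA A e z w :
  gadj (setA A e) z w = gadj A z w || ((val e == (z, w)) || (val e == (w, z))).
Proof.
apply/existsP/orP => [[e' /andP [H1]] | ].
  rewrite ffunE => /orP [H2 | /eqP E]; first by left; apply/existsP; exists e'; rewrite H1.
  by right; rewrite -E.
case => [/existsP [e' /andP [H1 H2]] | H]; first by exists e'; rewrite H1 ffunE H2.
by exists e; rewrite H ffunE eqxx orbT.
Qed.

Lemma cyc_adjC (s : seq 'I_n) u v : cyc_adj s u v = cyc_adj s v u.
Proof. by rewrite /cyc_adj eq_sym; do !bool_congr; rewrite orbC. Qed.

End G.

Section St.
Variables (n : nat) (x0 : 'I_n).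

Definition uhd (U : seq 'I_n) := head x0 U.
Definition ult (U : seq 'I_n) := last x0 U.

Definition PadjV (us : seq (seq 'I_n)) u v := has (fun U => sadj U u v) us.
Definition PadjE us (e : edge_idx n) := PadjV us (val e).1 (val e).2.
Definition openv (us : seq (seq 'I_n)) w := has (fun U => (w == uhd U) || (w == ult U)) us.
Definition same (us : seq (seq 'I_n)) u w := has (fun U => (u \in U) && (w \in U)) us.
Definition cset us (A : graph n) u := [set w | openv us w && ~~ same us u w && gadj A u w].
Definition degA (A : graph n) u := #|[set w | gadj A u w]|.
Definition degP us u := #|[set w | PadjV us u w]|.

Lemma PadjVC us u v : PadjV us u v = PadjV us v u.
Proof. by apply: eq_has => U; rewrite sadjC. Qed.

Lemma A_noP us (A : graph n) u v : (forall e, A e -> ~~ PadjE us e) ->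
  gadj A u v -> ~~ PadjV us u v.
Proof.
move=> H /existsP [e /andP [He HA]]; have := H e HA; rewrite /PadjE.
by case/orP: He => /eqP ->; rewrite // PadjVC.
Qed.

Lemma head_rev (s : seq 'I_n) : head x0 (rev s) = last x0 s.
Proof. by case/lastP: s => [|s y] //; rewrite rev_rcons last_rcons. Qed.

Lemma last_rev (s : seq 'I_n) : last x0 (rev s) = head x0 s.
Proof. by case: s => [|y s] //; rewrite rev_cons last_rcons. Qed.

Lemma degP_le2 us u : uniq (flatten us) -> degP us u <= 2.
Proof.
move=> Hu; set s := flatten us.
apply: leq_trans (_ : #|[set nth x0 s (index u s).+1; nth x0 s (index u s).-1]| <= 2).
  apply: subset_leq_card; apply/subsetP => w; rewrite !inE => /hasP [U HU].
  case/orP => H; have H' := ladj_flatten HU H; have /andP [Hm1 Hm2] := ladj_mem H'.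
  - by rewrite -(ladj_index Hu H') nth_index ?eqxx.
  - by rewrite (ladj_index Hu H') /= nth_index ?eqxx ?orbT.
by rewrite cards2; case: (_ != _).
Qed.

Lemma mem_hd (U : seq 'I_n) : U != [::] -> uhd U \in U.
Proof. by case: U => // x U _; rewrite inE eqxx. Qed.

Lemma mem_lt (U : seq 'I_n) : U != [::] -> ult U \in U.
Proof. by case: U => // x U _; rewrite /ult /= mem_last. Qed.

Lemma split_lt (U : seq 'I_n) a : U != [::] -> ult U = a -> exists U', U = rcons U' a.
Proof. by case/lastP: U => [|U x] //; rewrite /ult last_rcons => _ ->; exists U. Qed.

Lemma split_hd (U : seq 'I_n) a : U != [::] -> uhd U = a -> exists U', U = a :: U'.
Proof. by case: U => [|x U] //; rewrite /uhd /= => _ ->; exists U. Qed.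

Lemma ladj_join (X Y : seq 'I_n) a b z w :
  ladj (rcons X a ++ b :: Y) z w =
  [|| ladj (rcons X a) z w, ladj (b :: Y) z w | (a == z) && (b == w)].
Proof.
rewrite ladj_cat.
have -> : rcons (rcons X a) b = X ++ a :: [:: b] by rewrite -!cats1 -catA.
by rewrite ladj_cat /= orbF -orbA; congr (_ || _); rewrite orbC.
Qed.

Lemma merge_lem (us : seq (seq 'I_n)) a b :
  uniq (flatten us) -> all (fun U => U != [::]) us ->
  openv us a -> openv us b -> ~~ same us a b ->
  exists us' : seq (seq 'I_n), [/\ perm_eq (flatten us') (flatten us),
     all (fun U => U != [::]) us', (size us').+1 = size us,
     (forall z w, PadjV us' z w = [|| PadjV us z w, (z == a) && (w == b) | (z == b) && (w == a)]) &
     (forall w, openv us' w -> openv us w) /\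
     (forall z w, same us z w -> same us' z w)].
Proof.
move=> Hu Hne /hasP [X HX Xa] /hasP [Y HY Yb] Hns.
have Hne' : forall U, U \in us -> U != [::] by move=> U HU; exact: (allP Hne).
have HXn := Hne' X HX; have HYn := Hne' Y HY.
have aX : a \in X.
  by case/orP: Xa => /eqP ->; [apply: mem_hd | apply: mem_lt].
have bY : b \in Y.
  by case/orP: Yb => /eqP ->; [apply: mem_hd | apply: mem_lt].
have XY : X != Y.
  apply: contraNneq Hns => E; apply/hasP; exists X => //; rewrite aX -E in bY *; by rewrite bY.
have Huu := uniq_units Hu Hne.
have HYr : Y \in rem X us by rewrite (mem_rem_uniq _ Huu) inE eq_sym XY.
set rest := rem Y (rem X us).
have Hperm : perm_eq us (X :: Y :: rest).
  apply: perm_trans (perm_to_rem HX) _; rewrite perm_cons; exact: perm_to_rem.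
set X' := if a == ult X then X else rev X.
set Y' := if b == uhd Y then Y else rev Y.
have HX'p : perm_eq X' X by rewrite /X'; case: ifP => _; rewrite ?perm_rev.
have HY'p : perm_eq Y' Y by rewrite /Y'; case: ifP => _; rewrite ?perm_rev.
have HX'l : ult X' = a.
  rewrite /X'; case: ifP => [/eqP -> //|]; rewrite /ult last_rev.
  by case/orP: Xa => /eqP -> //; rewrite eqxx.
have HY'h : uhd Y' = b.
  rewrite /Y'; case: ifP => [/eqP -> //|]; rewrite /uhd head_rev.
  by case/orP: Yb => /eqP -> //; rewrite eqxx.
have HX'n : X' != [::] by rewrite /X'; case: ifP; rewrite // -size_eq0 size_rev size_eq0.
have HY'n : Y' != [::] by rewrite /Y'; case: ifP; rewrite // -size_eq0 size_rev size_eq0.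
have HsX : forall z w, sadj X' z w = sadj X z w by move=> z w; rewrite /X'; case: ifP; rewrite ?sadj_rev.
have HsY : forall z w, sadj Y' z w = sadj Y z w by move=> z w; rewrite /Y'; case: ifP; rewrite ?sadj_rev.
have [X'' EX] := split_lt HX'n HX'l.
have [Y'' EY] := split_hd HY'n HY'h.
exists ((X' ++ Y') :: rest); split.
- have Hpf : perm_eq (flatten (X :: Y :: rest)) (flatten us).
    by apply: perm_flatten; rewrite perm_sym.
  apply: perm_trans _ Hpf; rewrite /= !catA.
  apply: perm_cat => //; exact: perm_cat.
- have : all (fun U => U != [::]) (X :: Y :: rest) by rewrite -(perm_all _ Hperm).
  case/and3P => _ _ Hr; apply/andP; split; last exact: Hr.
  by rewrite EX; case: (X'').
- by rewrite (perm_size Hperm).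
- move=> z w; rewrite /PadjV (perm_has _ Hperm) /= -/(PadjV rest z w).
  rewrite -HsX -HsY /sadj EX EY !ladj_join.
  rewrite ![a == _]eq_sym ![b == _]eq_sym.
  case: (ladj (rcons X'' a) z w); case: (ladj (rcons X'' a) w z);
  case: (ladj (b :: Y'') z w); case: (ladj (b :: Y'') w z);
  case: (z == a); case: (z == b); case: (w == a); case: (w == b); by case: (PadjV rest z w).
- have H1 : uhd (X' ++ Y') = uhd X' by rewrite /uhd EX; case: (X'').
  have H2 : ult (X' ++ Y') = ult Y' by rewrite /ult last_cat EY.
  have H3 : (uhd X' == uhd X) || (uhd X' == ult X).
    by rewrite /X'; case: ifP => _; rewrite ?eqxx // /uhd head_rev eqxx orbT.
  have H4 : (ult Y' == uhd Y) || (ult Y' == ult Y).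
    by rewrite /Y'; case: ifP => _; rewrite ?eqxx ?orbT // /ult last_rev eqxx.
  split.
  + move=> w; rewrite /openv (perm_has _ Hperm) /= H1 H2 -/(openv rest w).
    case/orP => [/orP [/eqP -> | /eqP ->] | ->]; last by rewrite !orbT.
    * by rewrite H3.
    * by rewrite H4 orbT.
  + move=> z w; rewrite /same (perm_has _ Hperm) /= -/(same rest z w).
    have mX : forall v, v \in X -> v \in X' ++ Y'.
      by move=> v Hv; rewrite mem_cat (perm_mem HX'p) Hv.
    have mY : forall v, v \in Y -> v \in X' ++ Y'.
      by move=> v Hv; rewrite mem_cat (perm_mem HY'p) Hv orbT.
    case/orP => [/andP [Hz Hw] | /orP [/andP [Hz Hw] | ->]]; last by rewrite orbT.
    * by rewrite mX // mX.
    * by rewrite mY // mY.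
Qed.


End St.

Section Adv.
Variables (n : nat) (x0 : 'I_n) (T : nat).

Local Notation uhd := (uhd x0).
Local Notation ult := (ult x0).
Local Notation openv := (openv x0).

Definition Phi us (A : graph n) := \sum_(u : 'I_n) (T <= degA A u) * degP us u.

Definition Inv us (A : graph n) q : Prop :=
  [/\ perm_eq (flatten us) (enum 'I_n),
      all (fun U => U != [::]) us,
      (forall e, A e -> ~~ PadjE us e),
      (forall u, openv us u -> #|cset x0 us A u| <= T) &
      [/\ \sum_(u : 'I_n) degA A u <= 2 * q, n <= size us + q & n <= size us + Phi us A]].

Definition assigned us (A : graph n) e := A e || PadjE us e.

Lemma sum_eq1 (a : 'I_n) : \sum_(u : 'I_n) ((u == a) : nat) = 1.
Proof. by rewrite (bigD1 a) //= eqxx big1 // => i /negbTE ->. Qed.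

Lemma sameC (us : seq (seq 'I_n)) u w : same us u w = same us w u.
Proof. by apply: eq_has => U; rewrite andbC. Qed.

Lemma degA_set (A : graph n) e u :
  degA (setA A e) u <= degA A u + (u == (val e).1) + (u == (val e).2).
Proof.
rewrite /degA -addnA.
apply: leq_trans (_ : #|[set w | gadj A u w] :|: [set w | ((u == (val e).1) && (w == (val e).2))
          || ((u == (val e).2) && (w == (val e).1))]| <= _).
  apply: subset_leq_card; apply/subsetP => w; rewrite !inE gadj_setA.
  case/orP => [-> //| /orP [] /eqP E]; rewrite E /= !eqxx ?orbT //.
apply: leq_trans (leq_card_setU _ _) _; rewrite leq_add2l.
case: (u =P (val e).1) => [E1|_]; case: (u =P (val e).2) => [E2|_] /=.
- have := valP e; rewrite -E1 -E2 ltnn //.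
- by rewrite (_ : [set w | _] = [set (val e).2]) ?cards1 //; apply/setP => w; rewrite !inE orbF.
- by rewrite (_ : [set w | _] = [set (val e).1]) ?cards1 //; apply/setP => w; rewrite !inE.
- by rewrite (_ : [set w | _] = set0) ?cards0 //; apply/setP => w; rewrite !inE.
Qed.

Lemma degA_mono (A : graph n) e u : degA A u <= degA (setA A e) u.
Proof.
apply: subset_leq_card; apply/subsetP => w; rewrite !inE gadj_setA => ->; by [].
Qed.

Lemma cset_sub us (A A' : graph n) u :
  (forall w, openv us w -> ~~ same us u w -> gadj A' u w -> gadj A u w) ->
  cset x0 us A' u \subset cset x0 us A u.
Proof.
move=> H; apply/subsetP => w; rewrite !inE => /andP [/andP [H1 H2] /(H w H1 H2) ->].
by rewrite H1 H2.
Qed.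

Lemma sum_mono (f g : 'I_n -> nat) : (forall u, f u <= g u) ->
  \sum_(u : 'I_n) f u <= \sum_(u : 'I_n) g u.
Proof. by move=> H; apply: leq_sum => u _. Qed.

Lemma step_absent us A q e :
  Inv us A q -> ~~ assigned us A e ->
  (~~ openv us (val e).1 || ~~ openv us (val e).2 || same us (val e).1 (val e).2
   || (degA A (val e).1 < T) && (degA A (val e).2 < T)) ->
  Inv us (setA A e) q.+1.
Proof.
move=> [Hp Hne HAP Hc [Hs Hq HPhi]] Hna Hcase.
move: Hna; rewrite /assigned negb_or => /andP [HnA HnP].
set a := (val e).1 in Hcase *; set b := (val e).2 in Hcase *.
have Hab : a != b by apply/negbT; exact: ltn_eqF (valP e).
split => //.
- move=> e'; rewrite ffunE => /orP [/HAP // | /eqP ->]; exact: HnP.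
- move=> u Hu.
  case Hspec : [&& (u == a) || (u == b), openv us a, openv us b & ~~ same us a b].
  + case/and4P: Hspec => Huab Ha Hb Hs'; rewrite Ha Hb (negbTE Hs') /= in Hcase; case/andP: Hcase => Ha' Hb'.
    apply: leq_trans (_ : degA (setA A e) u <= T).
      apply: subset_leq_card; apply/subsetP => w; rewrite !inE => /andP [_ ->]; by [].
    apply: leq_trans (degA_set A e u) _.
    have Hba : (b == a) = false by rewrite eq_sym (negbTE Hab).
    case/orP: Huab => /eqP ->; rewrite ?eqxx ?(negbTE Hab) ?Hba /=; lia.
  + apply: leq_trans _ (Hc u Hu); apply: subset_leq_card; apply: cset_sub.
    move=> w Hw Hsw; rewrite gadj_setA => /orP [//| H].
    exfalso; move/negbT: Hspec; apply/negP; apply/negPn.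
    case/orP: H => /eqP E.
    * have Ea : a = u by rewrite /a E.
      have Eb : b = w by rewrite /b E.
      by rewrite Ea Eb eqxx Hu Hw Hsw.
    * have Ea : a = w by rewrite /a E.
      have Eb : b = u by rewrite /b E.
      by rewrite Ea Eb eqxx orbT Hu Hw sameC Hsw.
- split.
  + apply: leq_trans (sum_mono (degA_set A e)) _.
    by rewrite !big_split /= !sum_eq1 -addnA addnC mulnS leq_add2l.
  + lia.
  + apply: leq_trans HPhi _; rewrite leq_add2l; apply: sum_mono => u.
    apply: leq_mul => //; case: (leqP T (degA A u)) => H //=; by rewrite (leq_trans H (degA_mono A e u)).
Qed.

Lemma degP_mono (us us' : seq (seq 'I_n)) u :
  (forall z w, PadjV us z w -> PadjV us' z w) -> degP us u <= degP us' u.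
Proof. by move=> H; apply: subset_leq_card; apply/subsetP => w; rewrite !inE => /H. Qed.

Lemma degP_inc (us us' : seq (seq 'I_n)) h o :
  (forall z w, PadjV us z w -> PadjV us' z w) -> PadjV us' h o -> ~~ PadjV us h o ->
  degP us h < degP us' h.
Proof.
move=> H H1 H2; apply: proper_card; apply/properP; split.
  by apply/subsetP => w; rewrite !inE => /H.
by exists o; rewrite !inE.
Qed.

Lemma PadjE_merge us us' a b (e : edge_idx n) :
  (val e).1 = a -> (val e).2 = b ->
  (forall z w, PadjV us' z w = [|| PadjV us z w, (z == a) && (w == b) | (z == b) && (w == a)]) ->
  forall e', PadjE us' e' = PadjE us e' || (e' == e).
Proof.
move=> Ea Eb HP e'; rewrite /PadjE HP; congr (_ || _).
have -> : ((val e').1 == b) && ((val e').2 == a) = false.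
  apply/negbTE; apply/negP => /andP [/eqP E1 /eqP E2].
  have H1 := valP e'; have H2 := valP e; rewrite /= E1 E2 in H1; rewrite /= Ea Eb in H2.
  by have := ltn_trans H1 H2; rewrite ltnn.
rewrite orbF; apply/andP/eqP => [[/eqP E1 /eqP E2] | ->]; last by rewrite Ea Eb.
by apply: val_inj; rewrite [val e']surjective_pairing [val e]surjective_pairing E1 E2 Ea Eb.
Qed.

Lemma step_merge us A q e :
  Inv us A q -> ~~ assigned us A e ->
  openv us (val e).1 -> openv us (val e).2 -> ~~ same us (val e).1 (val e).2 ->
  (T <= degA A (val e).1) || (T <= degA A (val e).2) ->
  exists us', Inv us' A q.+1 /\ forall e', PadjE us' e' = PadjE us e' || (e' == e).
Proof.
move=> [Hp Hne HAP Hc [Hs Hq HPhi]] Hna Ha Hb Hns Hh.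
move: Hna; rewrite /assigned negb_or => /andP [HnA HnP].
have Hu : uniq (flatten us) by rewrite (perm_uniq Hp) enum_uniq.
have [us' [Hpf Hne' Hsz HP [Hop Hsm]]] := merge_lem Hu Hne Ha Hb Hns.
have Hkey := PadjE_merge erefl erefl HP.
have HPm : forall z w, PadjV us z w -> PadjV us' z w by move=> z w H; rewrite HP H.
exists us'; split => //; split => //.
- exact: perm_trans Hpf Hp.
- move=> e' HA'; rewrite Hkey negb_or HAP //=; apply: contraNneq HnA => <-; exact: HA'.
- move=> u Hu'; apply: leq_trans (Hc u (Hop u Hu')).
  apply: subset_leq_card; apply/subsetP => w; rewrite !inE => /andP [/andP [H1 H2] H3].
  rewrite Hop // H3 andbT /=; apply: contra H2; exact: Hsm.
- split.
  + by apply: leq_trans Hs _; rewrite leq_mul2l leqnSn orbT.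
  + by rewrite addnS -addSn Hsz.
  + set h := if T <= degA A (val e).1 then (val e).1 else (val e).2.
    set o := if T <= degA A (val e).1 then (val e).2 else (val e).1.
    have Hhh : T <= degA A h by rewrite /h; case: ifP => // /negbT H; move: Hh; rewrite (negbTE H).
    have Hhi : degP us h < degP us' h.
      apply: (degP_inc (o := o)) => //.
      * rewrite HP /h /o; case: ifP => _; by rewrite !eqxx ?orbT.
      * rewrite /h /o; case: ifP => _; last rewrite PadjVC; exact: HnP.
    apply: leq_trans HPhi _; rewrite -Hsz addSnnS leq_add2l /Phi.
    apply: leq_trans (_ : \sum_(u : 'I_n) ((T <= degA A u) * degP us u + (u == h)) <= _).
      by rewrite big_split /= sum_eq1 addn1.
    apply: sum_mono => u; case: (u =P h) => [-> | _].
      by rewrite Hhh !mul1n addn1.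
    by rewrite addn0 leq_mul2l (degP_mono _ HPm) orbT.
Qed.

End Adv.

Section Fw.
Variables (n : nat) (x0 : 'I_n) (T : nat).

Local Notation openv := (openv x0).
Local Notation Inv := (Inv x0 T).

Lemma step us A q e : Inv us A q -> ~~ assigned us A e ->
  exists us' A', [/\ Inv us' A' q.+1, assigned us' A' e &
    forall e', assigned us A e' -> assigned us' A' e' && (PadjE us' e' == PadjE us e')].
Proof.
move=> HI Hna.
case Hc : (~~ openv us (val e).1 || ~~ openv us (val e).2 || same us (val e).1 (val e).2
   || (degA A (val e).1 < T) && (degA A (val e).2 < T)).
- exists us, (setA A e); split.
  + exact: step_absent.
  + by rewrite /assigned ffunE eqxx orbT.
  + by move=> e'; rewrite /assigned ffunE eqxx andbT; case/orP => ->; rewrite ?orbT.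
- move/negbT: Hc; rewrite !negb_or !negbK negb_and -!leqNgt.
  case/andP => /andP [/andP [Ha Hb] Hns] Hh.
  have [us' [HI' Hk]] := step_merge HI Hna Ha Hb Hns Hh.
  exists us', A; split => //.
  + by rewrite /assigned Hk eqxx !orbT.
  + move=> e' He'; rewrite /assigned Hk.
    have -> : (e' == e) = false.
      by apply/negbTE; apply: contraNneq Hna => <-.
    by rewrite orbF eqxx andbT.
Qed.

Definition cons us A (x : graph n) := forall e, assigned us A e -> x e = PadjE us e.

Variable D : nat.
Hypothesis Hcomp : forall us A q, Inv us A q -> q <= D ->
  exists x1 x2, [/\ cons us A x1, cons us A x2, one_cycle x1 & two_cycles x2].

Lemma adv (t : dtree (edge_idx n)) : forall us A q, Inv us A q -> q + dt_depth t <= D ->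
  exists x1 x2, [/\ cons us A x1, cons us A x2, one_cycle x1, two_cycles x2
     & dt_eval t x1 = dt_eval t x2].
Proof.
elim: t => [b | e t0 IH0 t1 IH1] us A q HI Hd.
  have [x1 [x2 [H1 H2 H3 H4]]] := Hcomp HI (leq_trans (leq_addr _ _) Hd).
  by exists x1, x2.
have Hd0 : q + dt_depth t0 < q + dt_depth (Node e t0 t1).
  by rewrite /= ltn_add2l ltnS leq_maxl.
have Hd1 : q + dt_depth t1 < q + dt_depth (Node e t0 t1).
  by rewrite /= ltn_add2l ltnS leq_maxr.
case Ha : (assigned us A e).
- case Hb : (PadjE us e).
  + have [x1 [x2 [H1 H2 H3 H4 H5]]] := IH1 us A q HI (ltnW (leq_trans Hd1 Hd)).
    exists x1, x2; split => //=; by rewrite (H1 e Ha) (H2 e Ha) Hb.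
  + have [x1 [x2 [H1 H2 H3 H4 H5]]] := IH0 us A q HI (ltnW (leq_trans Hd0 Hd)).
    exists x1, x2; split => //=; by rewrite (H1 e Ha) (H2 e Ha) Hb.
- have [us' [A' [HI' Ha' Hm]]] := step HI (negbT Ha).
  have Hcons : forall x, cons us' A' x -> cons us A x.
    move=> x Hx e' He'; case/andP: (Hm e' He') => H1 /eqP <-; exact: Hx.
  case Hb : (PadjE us' e).
  + have [x1 [x2 [H1 H2 H3 H4 H5]]] := IH1 us' A' q.+1 HI' (leq_trans Hd1 Hd).
    exists x1, x2; split => //=; try exact: Hcons.
    by rewrite (H1 e Ha') (H2 e Ha') Hb.
  + have [x1 [x2 [H1 H2 H3 H4 H5]]] := IH0 us' A' q.+1 HI' (leq_trans Hd0 Hd).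
    exists x1, x2; split => //=; try exact: Hcons.
    by rewrite (H1 e Ha') (H2 e Ha') Hb.
Qed.

End Fw.

Lemma arith m q M T : 12 <= m -> T = (m + m) %/ 16 -> 512 * q < (m + m) ^ 2 ->
  M <= q -> M * T <= 4 * q -> M + 4 * T + 6 <= m /\ 2 * M <= m.
Proof.
move=> Hm HT Hq HM HMT.
have HT1 : 16 * T <= m + m by rewrite HT mulnC leq_divM.
have HT2 : m + m < 16 * T + 16 by rewrite HT mulnC -mulSnr ltn_ceil.
rewrite expnS expn1 in Hq.
have [Hs|Hl] := leqP m 33.
- nia.
- nia.
Qed.

Section Comp.
Variables (n : nat) (x0 : 'I_n) (T : nat).

Local Notation uhd := (uhd x0).
Local Notation ult := (ult x0).
Local Notation openv := (openv x0).
Local Notation Inv := (Inv x0 T).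

Variables (us : seq (seq 'I_n)) (A : graph n) (q : nat).
Hypothesis HI : Inv us A q.

Let R : rel 'I_n := fun u v => ~~ gadj A u v.

Lemma Hu : uniq (flatten us).
Proof. by case: HI => Hp _ _ _ _; rewrite (perm_uniq Hp) enum_uniq. Qed.

Lemma Hne : forall U, U \in us -> U != [::].
Proof. by case: HI => _ Hne _ _ _ U HU; exact: (allP Hne). Qed.

Lemma count_ends (f : seq 'I_n -> 'I_n) (z : 'I_n) U :
  (forall V, V \in us -> (f V \in V) && openv us (f V)) ->
  U \in us -> z \in U -> openv us z ->
  count (fun V => gadj A z (f V)) us <= T.+1.
Proof.
move=> Hf HU HzU Hz; case: HI => _ _ _ Hc _.
rewrite -(count_map f (gadj A z)) -size_filter.
have Hmu : uniq (map f us).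
  rewrite map_inj_in_uniq; first exact: uniq_units Hu (introT allP Hne).
  move=> V V' HV HV' E; apply: (unit_unique Hu HV HV' (x := f V)).
  + by case/andP: (Hf V HV).
  + by rewrite E; case/andP: (Hf V' HV').
rewrite -(card_uniqP (filter_uniq _ Hmu)).
apply: leq_trans (_ : #|f U |: cset x0 us A z| <= _).
  apply: subset_leq_card; apply/subsetP => w; rewrite mem_filter => /andP [Hg /mapP [V HV Ew]].
  rewrite !inE; case Hs : (same us z w).
  + case/hasP: Hs => W HW /andP [HzW HwW].
    have EWU : W = U by apply: (unit_unique Hu HW HU HzW HzU).
    have EVU : V = U.
      apply: (unit_unique Hu HV HU (x := w)); first by rewrite Ew; case/andP: (Hf V HV).
      by rewrite -EWU.
    by rewrite Ew EVU eqxx.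
  + by rewrite Hg andbT /= Ew; case/andP: (Hf V HV) => _ ->; rewrite orbT.
by rewrite cardsU1 -add1n; apply: leq_add; [case: (_ \notin _) | exact: Hc z Hz].
Qed.

Lemma ends_ok : forall V, V \in us -> ((uhd V \in V) && openv us (uhd V)) /\
                                      ((ult V \in V) && openv us (ult V)).
Proof.
move=> V HV; rewrite (mem_hd _ (Hne HV)) (mem_lt _ (Hne HV)) /openv; split;
  by apply/hasP; exists V; rewrite // eqxx ?orbT.
Qed.

Lemma path_ladj (U : seq 'I_n) : (forall a b, ladj U a b -> R a b) -> path R (head x0 U) (behead U).
Proof.
case: U => [|u U] //; rewrite [head _ _]/= [behead _]/=.
elim: U u => [|v U IH] u H //; rewrite [path _ _ _]/=.
rewrite (H u v); last by rewrite ladj_cons2 !eqxx.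
by apply: IH => a b Hab; apply: H; rewrite ladj_cons2 Hab orbT.
Qed.

Lemma ladj_R U a b : U \in us -> ladj U a b -> R a b.
Proof.
move=> HU Hl; case: HI => _ _ HAP _ _; apply/negP => /(A_noP HAP) /negP; apply.
by rewrite /PadjV; apply/hasP; exists U => //; rewrite /sadj Hl.
Qed.

Lemma group_cycle g rest : perm_eq (g ++ rest) us -> 4 * T.+1 + 2 <= size g ->
  exists s, [/\ perm_eq s (flatten g), cycle R s &
     (forall U, U \in g -> forall a b, ladj U a b -> ladj s a b)].
Proof.
move=> Hp Hsz.
have Hg : forall U, U \in g -> U \in us by move=> U HU; rewrite -(perm_mem Hp) mem_cat HU.
have Hcg : forall p : pred (seq 'I_n), count p g <= count p us.
  by move=> p; rewrite -(permP Hp) count_cat leq_addr.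
have H1 : forall U, U \in g -> count (fun V => ~~ jn x0 R V U) g <= T.+1.
  move=> U HU; apply: leq_trans (Hcg _) _.
  rewrite (eq_count (a2 := fun V => gadj A (uhd U) (ult V))); last first.
    by move=> V; rewrite /jn /R negbK gadjC.
  apply: (count_ends (U := U)) => //; try by move=> V HV; case: (ends_ok HV).
  + exact: Hg.
  + by case: (ends_ok (Hg U HU)) => /andP [] .
  + by case: (ends_ok (Hg U HU)) => /andP [].
have H2 : forall U, U \in g -> count (fun V => ~~ jn x0 R U V) g <= T.+1.
  move=> U HU; apply: leq_trans (Hcg _) _.
  rewrite (eq_count (a2 := fun V => gadj A (ult U) (uhd V))); last first.
    by move=> V; rewrite /jn /R negbK.
  apply: (count_ends (U := U)) => //; try by move=> V HV; case: (ends_ok HV).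
  + exact: Hg.
  + by case: (ends_ok (Hg U HU)) => _ /andP [].
  + by case: (ends_ok (Hg U HU)) => _ /andP [].
have [zs [Hz Hc]] := @arrange _ x0 R T.+1 g H1 H2 Hsz.
exists (flatten zs); split.
- exact: perm_flatten.
- apply: flat_cycle => //.
  + by apply/allP => V HV; apply: Hne; apply: Hg; rewrite -(perm_mem Hz).
  + move=> V HV; apply: path_ladj => a b; apply: ladj_R; apply: Hg; by rewrite -(perm_mem Hz).
  + exact: Hc.
- by move=> U HU a b Hl; apply: (ladj_flatten (U := U)); rewrite ?(perm_mem Hz).
Qed.

Lemma cyc_true (s : seq 'I_n) U a b : uniq s -> (ladj U a b -> ladj s a b) ->
  ladj U a b -> cyc_adj s a b.
Proof.
move=> Hs Hsub /Hsub Hl; have /andP [Ha Hb] := ladj_mem Hl.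
have Hnx := ladj_next Hs Hl; have Hix := ladj_index Hs Hl.
have Hab : a != b by apply/eqP => E; move: Hix; rewrite E; lia.
by rewrite /cyc_adj Hab Ha Hb Hnx eqxx.
Qed.

Lemma cyc_false (s : seq 'I_n) a b : cycle R s -> gadj A a b -> cyc_adj s a b = false.
Proof.
move=> Hc Hg; apply/negP => /and4P [_ Ha Hb /orP [] /eqP E].
- by have := next_cycle Hc Ha; rewrite -E /R Hg.
- by have := next_cycle Hc Hb; rewrite -E /R gadjC Hg.
Qed.

Lemma size_flat1 (l : seq (seq 'I_n)) : (forall U, U \in l -> size U = 1) ->
  size (flatten l) = size l.
Proof.
elim: l => [|U l IH] // H; rewrite /= size_cat H ?inE ?eqxx // IH // => V HV.
by apply: H; rewrite inE HV orbT.
Qed.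

Lemma size_flat_ge (l : seq (seq 'I_n)) : (forall U, U \in l -> U != [::]) ->
  size l <= size (flatten l).
Proof.
elim: l => [|U l IH] // H; rewrite /= size_cat -add1n leq_add //.
  by have := H U (mem_head _ _); case: (U).
by apply: IH => V HV; apply: H; rewrite inE HV orbT.
Qed.

Lemma size_flat2 (l : seq (seq 'I_n)) : (forall U, U \in l -> 1 < size U) ->
  2 * size l <= size (flatten l).
Proof.
elim: l => [|U l IH] // H; rewrite /= size_cat mulnS leq_add //.
  by apply: H; rewrite inE eqxx.
by apply: IH => V HV; apply: H; rewrite inE HV orbT.
Qed.

Lemma cons_of (adj : 'I_n -> 'I_n -> bool) :
  (forall a b, adj a b = adj b a) ->
  (forall U, U \in us -> forall a b, ladj U a b -> adj a b) ->
  (forall a b, gadj A a b -> adj a b = false) ->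
  cons us A (graph_of adj).
Proof.
move=> Hsym Htrue Hfalse e; rewrite /assigned ffunE.
case Hp : (PadjE us e).
  move=> _; case/hasP: Hp => U HU; case/orP => Hl; first exact: Htrue Hl.
  by rewrite Hsym; exact: Htrue Hl.
by rewrite orbF => HA; apply: Hfalse; rewrite gadj_edge.
Qed.

Variables (D : nat).
Hypotheses (Hn24 : 24 <= n) (Hev : ~~ odd n) (HT : T = n %/ 16) (HD : 512 * D < n ^ 2)
  (HqD : q <= D).

Lemma complete : exists x1 x2,
  [/\ cons us A x1, cons us A x2, one_cycle x1 & two_cycles x2].
Proof.
case: HI => Hp Hne' HAP Hc [Hs Hq HPhi].
set m := n./2.
have Hnm : n = m + m by rewrite -{1}(odd_double_half n) (negbTE Hev) add0n addnn.
set M := n - size us.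
have HMq : M <= q by rewrite /M leq_subLR.
set H := \sum_(u : 'I_n) ((T <= degA A u) : nat).
have HPhi2 : Phi T us A <= H * 2.
  rewrite /H big_distrl /=; apply: sum_mono => u; rewrite leq_mul2l degP_le2 ?orbT //.
  exact: Hu.
have HHT : H * T <= 2 * q.
  apply: leq_trans Hs; rewrite /H big_distrl /=; apply: sum_mono => u.
  by case: (leqP T (degA A u)) => Hl /=; [rewrite mul1n | rewrite mul0n].
have HMT : M * T <= 4 * q.
  have : M <= H * 2 by rewrite /M leq_subLR; apply: leq_trans HPhi _; rewrite leq_add2l.
  move=> HM; apply: leq_trans (leq_mul HM (leqnn T)) _.
  by rewrite mulnAC (mulnC H) -mulnA mulnC -mulnA; nia.
have [Har1 Har2] : M + 4 * T + 6 <= m /\ 2 * M <= m.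
  apply: (@arith m q M T) => //; [lia | by rewrite -Hnm | rewrite -Hnm; lia].
have Hsfl : size (flatten us) = n by rewrite (perm_size Hp) size_enum_ord.
have HsM : size us + M = n.
  have := @size_flat_ge us (fun U HU => allP Hne' U HU); rewrite Hsfl => Hle; by rewrite /M subnKC.
set ntr := [seq U <- us | 1 < size U].
set sing := [seq U <- us | ~~ (1 < size U)].
have Hpf : perm_eq (ntr ++ sing) us by rewrite perm_filterC.
have Hsing : forall U, U \in sing -> size U = 1.
  move=> U; rewrite mem_filter -leqNgt => /andP [H1 H2].
  have := allP Hne' U H2; case: U H1 {H2} => [|u [|v U]] //.
have Hntr : forall U, U \in ntr -> 1 < size U by move=> U; rewrite mem_filter => /andP [].
set Vn := size (flatten ntr).
have HVs : Vn + size sing = n.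
  by rewrite -(size_flat1 Hsing) -size_cat -flatten_cat (perm_size (perm_flatten Hpf)).
have Hsz : size ntr + size sing = size us by rewrite -size_cat (perm_size Hpf).
have H2n : 2 * size ntr <= Vn by apply: size_flat2.
have HVM : Vn = M + size ntr by lia.
set r := m - Vn.
set g1 := ntr ++ take r sing.
set g2 := drop r sing.
have Hg12 : perm_eq (g1 ++ g2) us by rewrite /g1 /g2 -catA cat_take_drop.
have Hg21 : perm_eq (g2 ++ g1) us by rewrite perm_catC.
have Hrs : r <= size sing by rewrite /r; lia.
have Hsg1 : size g1 = m - M by rewrite /g1 size_cat size_takel //; rewrite /r; lia.
have Hsg2 : size g2 = m by rewrite /g2 size_drop /r; lia.
have Hsing_t : forall U, U \in take r sing -> size U = 1 by move=> U /mem_take; exact: Hsing.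
have Hsing_d : forall U, U \in g2 -> size U = 1 by move=> U /mem_drop; exact: Hsing.
have Hfg1 : size (flatten g1) = m by rewrite /g1 flatten_cat size_cat (size_flat1 Hsing_t) size_takel //; lia.
have Hfg2 : size (flatten g2) = m by rewrite (size_flat1 Hsing_d).
have Hp0 : perm_eq (us ++ [::]) us by rewrite cats0.
have Hz0 : 4 * T.+1 + 2 <= size us by lia.
have Hz1 : 4 * T.+1 + 2 <= size g1 by rewrite Hsg1; lia.
have Hz2 : 4 * T.+1 + 2 <= size g2 by rewrite Hsg2; lia.
have [s [Hs0 Hc0 Hl0]] := group_cycle Hp0 Hz0.
have [s1 [Hs1 Hc1 Hl1]] := group_cycle Hg12 Hz1.
have [s2 [Hs2 Hc2 Hl2]] := group_cycle Hg21 Hz2.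
have Huf := Hu.
have Hus : uniq s by rewrite (perm_uniq Hs0).
have Hus12 : uniq (s1 ++ s2).
  rewrite (perm_uniq (perm_cat Hs1 Hs2)) -flatten_cat (perm_uniq (perm_flatten Hg12)) //.
have Hus1 : uniq s1 by move: Hus12; rewrite cat_uniq => /andP [].
have Hus2 : uniq s2 by move: Hus12; rewrite cat_uniq => /and3P [].
exists (graph_of (cyc_adj s)), (graph_of (fun a b => cyc_adj s1 a b || cyc_adj s2 a b)); split.
- apply: cons_of.
  + exact: cyc_adjC.
  + by move=> U HU a b Hl; apply: (cyc_true Hus (Hl0 U HU a b) Hl).
  + by move=> a b Hg; apply: cyc_false.
- apply: cons_of.
  + by move=> a b; rewrite cyc_adjC [cyc_adj s2 _ _]cyc_adjC.
  + move=> U HU a b Hl; move: HU; rewrite -(perm_mem Hg12) mem_cat => /orP [] HU.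
    * by rewrite (cyc_true (U := U) Hus1 (Hl1 U HU a b) Hl).
    * by rewrite (cyc_true (U := U) Hus2 (Hl2 U HU a b) Hl) orbT.
  + by move=> a b Hg; rewrite !cyc_false.
- exists s; split => //.
  + by rewrite (perm_size Hs0).
  + by move=> u v Huv; rewrite gadj_graph_of // => a b; exact: cyc_adjC.
- exists s1, s2; split => //.
  + by rewrite (perm_size Hs1) Hfg1.
  + by rewrite (perm_size Hs2) Hfg2.
  + move=> u v Huv; rewrite gadj_graph_of // => a b.
    by rewrite cyc_adjC [cyc_adj s2 _ _]cyc_adjC.
Qed.

End Comp.

Lemma flatten_map1 (n : nat) (s : seq 'I_n) : flatten [seq [:: i] | i <- s] = s.
Proof. by elim: s => [|i s IH] //=; rewrite IH. Qed.

Lemma small_witness (n : nat) (n_even : ~~ odd n) :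
  exists x1 x2 : graph n, one_cycle x1 /\ two_cycles x2.
Proof.
set s := enum 'I_n.
have Hus : uniq s by rewrite enum_uniq.
have Hsz : size s = n by rewrite size_enum_ord.
have Hnm : n = n./2 + n./2 by rewrite -{1}(odd_double_half n) (negbTE n_even) add0n addnn.
exists (graph_of (cyc_adj s)), (graph_of (fun a b => cyc_adj (take n./2 s) a b || cyc_adj (drop n./2 s) a b)).
split.
- exists s; split => // u v Huv; rewrite gadj_graph_of // => a b; exact: cyc_adjC.
- exists (take n./2 s), (drop n./2 s); split.
  + by rewrite cat_take_drop.
  + by rewrite size_takel // Hsz; lia.
  + by rewrite size_drop Hsz; lia.
  + move=> u v Huv; rewrite gadj_graph_of // => a b.
    by rewrite cyc_adjC [cyc_adj (drop _ _) _ _]cyc_adjC.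
Qed.

Lemma init_inv (n : nat) (x0 : 'I_n) T :
  Inv x0 T [seq [:: i] | i <- enum 'I_n] [ffun _ => false] 0.
Proof.
set us0 := [seq [:: i] | i <- enum 'I_n].
set A0 : graph n := [ffun _ => false].
have HA0 : forall u w, gadj A0 u w = false.
  by move=> u w; apply/existsP => [[e]]; rewrite ffunE andbF.
have Hs : size us0 = n by rewrite size_map size_enum_ord.
split.
- by rewrite flatten_map1.
- by apply/allP => U /mapP [i _ ->].
- by move=> e; rewrite ffunE.
- move=> u _; apply: leq_trans (_ : #|(set0 : {set 'I_n})| <= T); last by rewrite cards0.
  by apply: subset_leq_card; apply/subsetP => w; rewrite !inE HA0 andbF.
- split; rewrite ?Hs ?addn0 //.
  rewrite big1 // => u _; apply/eqP; rewrite cards_eq0; apply/eqP/setP => w.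
  by rewrite !inE HA0.
  by rewrite leq_addr.
Qed.

Unset Implicit Arguments.

Theorem corollary4p6 (n : nat) (n_pos : 0 < n) (n_even : ~~ odd n) :
  forall (f : graph n -> bool) (t : dtree (edge_idx n)),
    extends_1v2Cycle f -> computes t f -> n ^ 2 <= 512 * dt_depth t.
Proof.
move=> f t [Hf1 Hf2] Hct; rewrite leqNgt; apply/negP => HD.
have [Hsmall | Hbig] := leqP 24 n; last first.
  have Hnm : n = n./2 + n./2 by rewrite -{1}(odd_double_half n) (negbTE n_even) add0n addnn.
  have Hd0 : dt_depth t = 0.
    have Hn : n <= 22 by move: Hbig; rewrite Hnm; lia.
    have : n ^ 2 <= 22 ^ 2 by rewrite leq_exp2r.
    move: HD; set N := n ^ 2; lia.
  have [x1 [x2 [H1 H2]]] := small_witness n_even.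
  move: Hd0 (Hct x1) (Hct x2); case: t {Hct HD} => [b | e t0 t1] //= _ E1 E2.
  by move: (Hf1 x1 H1) (Hf2 x2 H2); rewrite -E1 -E2 => ->.
set x0 := Ordinal n_pos.
set T := n %/ 16.
have HI := init_inv x0 T.
have Hcomp : forall us A q, Inv x0 T us A q -> q <= dt_depth t ->
  exists x1 x2, [/\ cons us A x1, cons us A x2, one_cycle x1 & two_cycles x2].
  move=> us A q HI' Hq; exact: (complete HI' Hsmall n_even erefl HD Hq).
have [x1 [x2 [_ _ H1 H2 E]]] := adv Hcomp HI (leqnn _).
move: E; rewrite (Hct x1) (Hct x2) (Hf1 x1 H1) (Hf2 x2 H2); by [].
Qed.
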